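(* Let $\mathcal A$ be a bialgebra with unit, comultiplication $\Delta$ and counit $\varepsilon$, and let $\mathcal A_1,\mathcal A_2\subset\mathcal A$ be subalgebras such that the multiplication map $\mu:\mathcal A_1\otimes\mathcal A_2\to\mathcal A$ is a linear isomorphism, $\Delta(\mathcal A_1)\subset\mathcal A\otimes\mathcal A_1$ and $\Delta(\mathcal A_2)\subset\mathcal A_2\otimes\mathcal A$. Define $\Pi_1,\Pi_2:\mathcal A\to\mathcal A$ by $\Pi_1(a_1a_2)=a_1\varepsilon(a_2)$, $\Pi_2(a_1a_2)=\varepsilon(a_1)a_2$ for $a_1\in\mathcal A_1$, $a_2\in\mathcal A_2$. Then for every $a\in\mathcal A$, $$\mu(\Pi_1\otimes\Pi_2)\Delta(a)=a.$$
   Context: Sweedler notation: $\Delta(a)=a'\otimes a''$; the claim reads $\Pi_1(a')\Pi_2(a'')=a$. *)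

(* Defs.v *)
(* Bialgebras over a field K, with elements of A (x) A encoded
   as finite lists of simple tensors (Sweedler sums). *)
From mathcomp Require Import all_boot all_algebra.
Set Implicit Arguments. Unset Strict Implicit. Unset Printing Implicit Defensive.
Import GRing.Theory.
Local Open Scope ring_scope.

Section Bialg.
Variables (K : fieldType) (A : algType K).

Definition lin_functional (f : A -> K) : Prop :=
  forall (k : K) (x y : A), f (k *: x + y) = k * f x + f y.

Definition lin_endo (f : A -> A) : Prop :=
  forall (k : K) (x y : A), f (k *: x + y) = k *: f x + f y.

(* A list t = [:: (x_1,y_1); ...] represents the tensor \sum_i x_i (x) y_i.
   tpair f g t is the evaluation of (f (x) g) on that tensor. *)
Definition tpair (f g : A -> K) (t : seq (A * A)) : K :=
  \sum_(p <- t) f p.1 * g p.2.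

(* Equality of tensors in A (x) A (over a field, two tensors are equal iff
   all f (x) g with f, g linear functionals agree on them). *)
Definition teq (t s : seq (A * A)) : Prop :=
  forall f g, lin_functional f -> lin_functional g -> tpair f g t = tpair f g s.

Definition tmul (t s : seq (A * A)) : seq (A * A) :=
  [seq (p.1 * q.1, p.2 * q.2) | p <- t, q <- s].

Record is_bialgebra (Delta : A -> seq (A * A)) (eps : A -> K) : Prop := {
  Delta_lin : forall (k : K) (a b : A) f g, lin_functional f -> lin_functional g ->
    tpair f g (Delta (k *: a + b)) = k * tpair f g (Delta a) + tpair f g (Delta b);
  Delta_mul : forall a b : A, teq (Delta (a * b)) (tmul (Delta a) (Delta b));
  Delta_one : teq (Delta 1) [:: (1, 1)];
  Delta_coassoc : forall (a : A) f g h,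
    lin_functional f -> lin_functional g -> lin_functional h ->
    \sum_(p <- Delta a) tpair f g (Delta p.1) * h p.2
    = \sum_(p <- Delta a) f p.1 * tpair g h (Delta p.2);
  eps_lin : lin_functional eps;
  eps_mul : forall a b : A, eps (a * b) = eps a * eps b;
  eps_one : eps 1 = 1;
  counit_l : forall a : A, \sum_(p <- Delta a) eps p.1 *: p.2 = a;
  counit_r : forall a : A, \sum_(p <- Delta a) eps p.2 *: p.1 = a
}.

End Bialg.

(* Main.v *)
Require Import Defs.
From mathcomp Require Import all_boot all_algebra.
From mathcomp Require Import boolp classical_sets.
From Stdlib Require Import ClassicalEpsilon.
Import GRing.Theory.
Local Open Scope ring_scope.

Module BasisM.
Set Implicit Arguments. Unset Strict Implicit. Unset Printing Implicit Defensive.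
Local Open Scope classical_set_scope.
Local Open Scope ring_scope.

Section Basis.
Variables (K : fieldType) (V : lmodType K).

Definition coef (b : V) (l : seq (K * V)) : K :=
  \sum_(q <- l) (if q.2 == b then q.1 else 0).
Definition lsum (l : seq (K * V)) : V := \sum_(q <- l) q.1 *: q.2.
Definition lover (B : V -> Prop) (l : seq (K * V)) := forall q, q \in l -> B q.2.
Definition indep (B : V -> Prop) := forall l, lover B l -> lsum l = 0 ->
  forall b, coef b l = 0.
Definition spans (B : V -> Prop) (x : V) := exists l, lover B l /\ lsum l = x.
Definition lscale (k : K) (l : seq (K * V)) := [seq (k * q.1, q.2) | q <- l].

Lemma coef_cat b l1 l2 : coef b (l1 ++ l2) = coef b l1 + coef b l2.
Proof. by rewrite /coef big_cat. Qed.
Lemma lsum_cat l1 l2 : lsum (l1 ++ l2) = lsum l1 + lsum l2.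
Proof. by rewrite /lsum big_cat. Qed.
Lemma coef_scale b k l : coef b (lscale k l) = k * coef b l.
Proof.
rewrite /coef big_map mulr_sumr; apply: eq_bigr => q _ /=.
by case: ifP; rewrite ?mulr0.
Qed.
Lemma lsum_scale k l : lsum (lscale k l) = k *: lsum l.
Proof. by rewrite /lsum big_map scaler_sumr; apply: eq_bigr => q _; rewrite scalerA. Qed.
Lemma lover_cat B l1 l2 : lover B l1 -> lover B l2 -> lover B (l1 ++ l2).
Proof. by move=> h1 h2 q; rewrite mem_cat => /orP[/h1|/h2]. Qed.
Lemma lover_scale B k l : lover B l -> lover B (lscale k l).
Proof. by move=> h q /mapP[q' /h ? ->]. Qed.

Lemma coef_nil b : coef b [::] = 0.
Proof. by rewrite /coef big_nil. Qed.

Lemma lsum_split x l : lsum l = coef x l *: x + lsum [seq q <- l | q.2 != x].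
Proof.
elim: l => [|q l IH]; first by rewrite /lsum /coef !big_nil scale0r addr0.
rewrite /= /lsum /coef !big_cons -/(lsum l) -/(coef x l) IH.
case: eqP => [->|_] /=; rewrite ?big_cons /=.
  by rewrite scalerDl addrA.
by rewrite add0r addrCA.
Qed.

Lemma coef_filter b x l : coef b [seq q <- l | q.2 != x] = if b == x then 0 else coef b l.
Proof.
elim: l => [|q l IH]; first by rewrite coef_nil; case: ifP.
rewrite /= /coef big_cons -/(coef b l).
case: eqP => [qx|qx] /=.
  rewrite -/(coef b [seq q <- l | q.2 != x]) IH; case: eqP => [bx|bx]; first by [].
  have -> : (q.2 == b) = false by rewrite qx; apply/eqP => /esym.
  by rewrite add0r.
rewrite big_cons /= -/(coef b [seq q <- l | q.2 != x]) IH.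
case: (b =P x) => [bx|//]; subst b.
by move/eqP/negbTE: qx => ->; rewrite addr0.
Qed.

Lemma chain_lover (F : set (set V)) l :
  total_on F subset -> lover (\bigcup_(X in F) X) l ->
  l = [::] \/ exists X, F X /\ lover X l.
Proof.
move=> tot; elim: l => [|q l IH] h; first by left.
right; have [X FX Xq] := h q (mem_head _ _).
have [->|[Y [FY hY]]] := IH (fun r r' => h r (@mem_behead _ (q :: l) r r')).
  by exists X; split=> // r; rewrite inE => /eqP ->.
have [XY|YX] := tot _ _ FX FY.
  exists Y; split=> // r; rewrite inE => /orP[/eqP ->|/hY//]; exact: XY.
exists X; split=> // r; rewrite inE => /orP[/eqP ->//|/hY]; exact: YX.
Qed.

Lemma exists_basis : exists B : set V, indep B /\ forall x, spans B x.
Proof.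
have [B [iB maxB]] : exists B : set V, indep B /\ forall C, B `<` C -> ~ indep C.
  apply: (@Zorn_bigcup V indep) => F FP tot l hl s0 b.
  have [->|[X [FX hX]]] := chain_lover tot hl; first exact: coef_nil.
  exact: (FP X FX).
exists B; split=> // x; apply: contrapT => nsp.
have nBx : ~ B x.
  move=> Bx; apply: nsp; exists [:: (1, x)]; split.
    by move=> q; rewrite inE => /eqP ->.
  by rewrite /lsum big_cons big_nil scale1r addr0.
apply: (maxB (B `|` [set x])).
  split; first by move=> y By; left.
  by move=> /(_ x (or_intror erefl)).
move=> l hl s0 b.
have ovo : lover B [seq q <- l | q.2 != x].
  move=> q; rewrite mem_filter => /andP[/eqP nx /hl[//|/= ex]]; by [].
have cx : coef x l = 0.
  apply: contrapT => /eqP nz; apply: nsp.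
  exists (lscale (- (coef x l)^-1) [seq q <- l | q.2 != x]); split.
    exact: lover_scale.
  rewrite lsum_scale; move: s0; rewrite (lsum_split x) => /eqP.
  rewrite addrC addr_eq0 => /eqP ->; rewrite scalerN scaleNr opprK scalerA mulVf //.
  by rewrite scale1r.
have so : lsum [seq q <- l | q.2 != x] = 0 by move: s0; rewrite (lsum_split x) cx scale0r add0r.
have := iB _ ovo so b; rewrite coef_filter; case: eqP => [->|//] _; exact: cx.
Qed.

End Basis.

End BasisM.
Import BasisM.

Module AuxM.
Set Implicit Arguments. Unset Strict Implicit. Unset Printing Implicit Defensive.
Local Open Scope ring_scope.

Lemma expand_gen (K : fieldType) (V : lmodType K) (S : seq V) (l : seq (K * V)) :
  uniq S -> (forall q, q \in l -> q.2 \in S) ->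
  \sum_(b <- S) coef b l *: b = lsum l.
Proof.
move=> uS; elim: l => [|q l IH] h.
  by rewrite /lsum big_nil; apply: big1 => b _; rewrite coef_nil scale0r.
rewrite /lsum big_cons -/(lsum l) -IH; last by move=> r hr; apply: h; rewrite inE hr orbT.
rewrite (eq_bigr (fun b => (if b == q.2 then q.1 *: b else 0) + coef b l *: b)); last first.
  move=> b _; rewrite /coef big_cons -/(coef b l) scalerDl; congr (_ + _).
  by rewrite eq_sym; case: eqP => // _; rewrite scale0r.
rewrite big_split /= (bigD1_seq q.2) //=; last by apply: h; exact: mem_head.
by rewrite eqxx big1 ?addr0 // => b /negbTE ->.
Qed.

Definition bilin (K : fieldType) (A : lmodType K) (B : A -> A -> A) :=
  (forall k x y z, B (k *: x + y) z = k *: B x z + B y z) /\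
  (forall k x y z, B z (k *: x + y) = k *: B z x + B z y).

Lemma bilin_sumL (K : fieldType) (A : lmodType K) (B : A -> A -> A) (I : Type)
   (S : seq I) (k : I -> K) (v : I -> A) y : bilin B ->
  B (\sum_(i <- S) k i *: v i) y = \sum_(i <- S) k i *: B (v i) y.
Proof.
move=> [hl _]; have B0 : B 0 y = 0.
  have := hl 1 0 0 y; rewrite !scale1r addr0 => /(congr1 (fun z => z - B 0 y)).
  by rewrite addrK subrr => /esym.
elim: S => [|i S IH]; first by rewrite !big_nil.
by rewrite !big_cons hl IH.
Qed.

Lemma bilin_sumR (K : fieldType) (A : lmodType K) (B : A -> A -> A) (I : Type)
   (S : seq I) (k : I -> K) (v : I -> A) y : bilin B ->
  B y (\sum_(i <- S) k i *: v i) = \sum_(i <- S) k i *: B y (v i).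
Proof.
move=> [_ hl]; have B0 : B y 0 = 0.
  have := hl 1 0 0 y; rewrite !scale1r addr0 => /(congr1 (fun z => z - B y 0)).
  by rewrite addrK subrr => /esym.
elim: S => [|i S IH]; first by rewrite !big_nil.
by rewrite !big_cons hl IH.
Qed.

Lemma transfer (K : fieldType) (A : algType K) (t s : seq (A * A)) (B : A -> A -> A) :
  teq t s -> bilin B -> \sum_(p <- t) B p.1 p.2 = \sum_(p <- s) B p.1 p.2.
Proof.
move=> hts hB.
have [Bs [iB sp]] := exists_basis A.
pose rep x := proj1_sig (constructive_indefinite_description _ (sp x)).
have hrep x : lover Bs (rep x) /\ lsum (rep x) = x := proj2_sig (constructive_indefinite_description _ (sp x)).
pose c b x := coef b (rep x).
have clin b : lin_functional (c b).
  move=> k x y.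
  pose l2 := lscale k (rep x) ++ rep y.
  pose d := rep (k *: x + y) ++ lscale (-1) l2.
  have ovd : lover Bs d.
    apply: lover_cat; first exact: (hrep _).1.
    apply: lover_scale; apply: lover_cat; [apply: lover_scale|]; exact: (hrep _).1.
  have sd : lsum d = 0.
    rewrite /d /l2 lsum_cat lsum_scale lsum_cat lsum_scale (hrep _).2 (hrep x).2 (hrep y).2.
    by rewrite scaleN1r subrr.
  have := iB d ovd sd b.
  rewrite /d /l2 coef_cat coef_scale coef_cat coef_scale mulN1r => /eqP.
  by rewrite subr_eq0 => /eqP.
pose vs := [seq p.1 | p <- t] ++ [seq p.2 | p <- t] ++ [seq p.1 | p <- s] ++ [seq p.2 | p <- s].
pose S := undup (flatten [seq [seq q.2 | q <- rep x] | x <- vs]).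
have expand x : x \in vs -> x = \sum_(b <- S) c b x *: b.
  move=> xv; rewrite (expand_gen (l := rep x)) ?(hrep x).2 ?undup_uniq //.
  move=> q hq; rewrite mem_undup; apply/flatten_mapP; exists x => //.
  exact: map_f.
have key r : (forall p, p \in r -> p.1 \in vs /\ p.2 \in vs) ->
    \sum_(p <- r) B p.1 p.2 = \sum_(b <- S) \sum_(b' <- S) tpair (c b) (c b') r *: B b b'.
  move=> hr.
  rewrite big_seq (eq_bigr (fun p => \sum_(b <- S) \sum_(b' <- S) (c b p.1 * c b' p.2) *: B b b')); last first.
    move=> p /hr [h1 h2]; rewrite {1}(expand _ h1) {1}(expand _ h2) bilin_sumL //.
    apply: eq_bigr => b _; rewrite bilin_sumR // scaler_sumr.
    by apply: eq_bigr => b' _; rewrite scalerA.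
  rewrite -big_seq exchange_big /=; apply: eq_bigr => b _.
  rewrite exchange_big /=; apply: eq_bigr => b' _.
  by rewrite /tpair scaler_suml.
rewrite (key t) ?(key s).
- apply: eq_bigr => b _; apply: eq_bigr => b' _.
  by rewrite (hts _ _ (clin b) (clin b')).
- move=> p hp; have h1 := map_f (fun p : A * A => p.1) hp.
  have h2 := map_f (fun p : A * A => p.2) hp.
  by split; rewrite /vs !mem_cat ?h1 ?h2 ?orbT.
- move=> p hp; have h1 := map_f (fun p : A * A => p.1) hp.
  have h2 := map_f (fun p : A * A => p.2) hp.
  by split; rewrite /vs !mem_cat ?h1 ?h2 ?orbT.
Qed.

Section Aux.
Variables (K : fieldType) (A : algType K).

Lemma endo0 (f : A -> A) : lin_endo f -> f 0 = 0.
Proof.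
move=> hf; have := hf 1 0 0; rewrite !scale1r addr0 => /(congr1 (fun z => z - f 0)).
by rewrite addrK subrr => /esym.
Qed.
Lemma endoZ (f : A -> A) k x : lin_endo f -> f (k *: x) = k *: f x.
Proof. by move=> hf; have := hf k x 0; rewrite addr0 endo0 // addr0. Qed.
Lemma endoD (f : A -> A) x y : lin_endo f -> f (x + y) = f x + f y.
Proof. by move=> hf; have := hf 1 x y; rewrite !scale1r. Qed.
Lemma endo_sum (f : A -> A) I (r : seq I) (F : I -> A) : lin_endo f ->
  f (\sum_(i <- r) F i) = \sum_(i <- r) f (F i).
Proof.
move=> hf; elim: r => [|i r IH]; first by rewrite !big_nil endo0.
by rewrite !big_cons endoD // IH.
Qed.

Lemma fun0 (f : A -> K) : lin_functional f -> f 0 = 0.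
Proof.
move=> hf; have := hf 1 0 0; rewrite !scale1r mul1r addr0 => /(congr1 (fun z => z - f 0)).
by rewrite addrK subrr => /esym.
Qed.
Lemma funZ (f : A -> K) k x : lin_functional f -> f (k *: x) = k * f x.
Proof. by move=> hf; have := hf k x 0; rewrite addr0 fun0 // addr0. Qed.

Lemma bilin_sum I (r : seq I) (F : I -> A -> A -> A) :
  (forall i, bilin (F i)) -> bilin (fun x y => \sum_(i <- r) F i x y).
Proof.
move=> hF; split=> k x y z.
  rewrite scaler_sumr -big_split; apply: eq_bigr => i _; exact: (hF i).1.
rewrite scaler_sumr -big_split; apply: eq_bigr => i _; exact: (hF i).2.
Qed.

Lemma bilin_mulr (B : A -> A -> A) u v : bilin B -> bilin (fun x y => B (x * u) (y * v)).
Proof.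
move=> [h1 h2]; split=> k x y z /=.
  by rewrite mulrDl -scalerAl h1.
by rewrite mulrDl -scalerAl h2.
Qed.
Lemma bilin_mull (B : A -> A -> A) u v : bilin B -> bilin (fun x y => B (u * x) (v * y)).
Proof.
move=> [h1 h2]; split=> k x y z /=.
  by rewrite mulrDr -scalerAr h1.
by rewrite mulrDr -scalerAr h2.
Qed.

Lemma bilin0 (B : A -> A -> A) y : bilin B -> B 0 y = 0.
Proof.
move=> [hl _]; have := hl 1 0 0 y; rewrite !scale1r addr0 => /(congr1 (fun z => z - B 0 y)).
by rewrite addrK subrr => /esym.
Qed.
Lemma bilinZ (B : A -> A -> A) k x y : bilin B -> B (k *: x) y = k *: B x y.
Proof. by move=> hB; have := hB.1 k x 0 y; rewrite addr0 bilin0 // addr0. Qed.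

Lemma Phi_lin (Delta : A -> seq (A * A)) (B : A -> A -> A) k a b :
  (forall (k : K) (a b : A) f g, lin_functional f -> lin_functional g ->
    tpair f g (Delta (k *: a + b)) = k * tpair f g (Delta a) + tpair f g (Delta b)) ->
  bilin B ->
  \sum_(p <- Delta (k *: a + b)) B p.1 p.2 =
  k *: \sum_(p <- Delta a) B p.1 p.2 + \sum_(p <- Delta b) B p.1 p.2.
Proof.
move=> Dlin hB.
rewrite (@transfer _ _ _ ([seq (k *: p.1, p.2) | p <- Delta a] ++ Delta b)) //.
  rewrite big_cat big_map scaler_sumr /=; congr (_ + _).
  by apply: eq_bigr => p _; rewrite bilinZ.
move=> f g hf hg; rewrite Dlin // /tpair big_cat big_map /= mulr_sumr.
by congr (_ + _); apply: eq_bigr => p _; rewrite funZ // mulrA.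
Qed.

End Aux.


End AuxM.
Import AuxM.

Theorem mainTheorem9 (K : fieldType) (A : algType K)
    (Delta : A -> seq (A * A)) (eps : A -> K)
    (A1 A2 : {pred A}) (Pi1 Pi2 : A -> A) :
  is_bialgebra Delta eps ->
  subalg_closed A1 -> subalg_closed A2 ->
  (forall a : A, exists t : seq (A * A),
      (forall p, p \in t -> (p.1 \in A1) /\ (p.2 \in A2)) /\
      a = \sum_(p <- t) p.1 * p.2) ->
  (forall t : seq (A * A),
      (forall p, p \in t -> (p.1 \in A1) /\ (p.2 \in A2)) ->
      \sum_(p <- t) p.1 * p.2 = 0 -> teq t [::]) ->
  (forall a : A, a \in A1 -> exists t : seq (A * A),
      teq (Delta a) t /\ (forall p, p \in t -> p.2 \in A1)) ->
  (forall a : A, a \in A2 -> exists t : seq (A * A),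
      teq (Delta a) t /\ (forall p, p \in t -> p.1 \in A2)) ->
  lin_endo Pi1 -> lin_endo Pi2 ->
  (forall a1 a2 : A, a1 \in A1 -> a2 \in A2 -> Pi1 (a1 * a2) = eps a2 *: a1) ->
  (forall a1 a2 : A, a1 \in A1 -> a2 \in A2 -> Pi2 (a1 * a2) = eps a1 *: a2) ->
  forall a : A, \sum_(p <- Delta a) Pi1 p.1 * Pi2 p.2 = a.
Proof.
move=> [Dlin Dmul _ _ elin emul e1 cl cr] [one1 _ mul1] [one2 _ mul2] surj _ D1 D2
  hP1 hP2 P1 P2.
pose M x y := Pi1 x * Pi2 y.
have hM : bilin M.
  split=> k x y z; rewrite /M.
    by rewrite hP1 mulrDl -scalerAl.
  by rewrite hP2 mulrDr -scalerAr.
have L1 x a2 : a2 \in A2 -> Pi1 (x * a2) = eps a2 *: Pi1 x.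
  move=> ha2; have [t [ht ->]] := surj x.
  rewrite mulr_suml !(endo_sum _ _ hP1) scaler_sumr big_seq [RHS]big_seq.
  apply: eq_bigr => p /ht [h1 h2]; rewrite -mulrA !P1 ?mul2 // emul.
  by rewrite scalerA mulrC.
have L2 x a1 : a1 \in A1 -> Pi2 (a1 * x) = eps a1 *: Pi2 x.
  move=> ha1; have [t [ht ->]] := surj x.
  rewrite mulr_sumr !(endo_sum _ _ hP2) scaler_sumr big_seq [RHS]big_seq.
  apply: eq_bigr => p /ht [h1 h2]; rewrite mulrA !P2 ?mul1 // emul.
  by rewrite scalerA.
have L3 a1 : a1 \in A1 -> Pi1 a1 = a1.
  by move=> h; rewrite -{1}[a1]mulr1 P1 // e1 scale1r.
have L4 a2 : a2 \in A2 -> Pi2 a2 = a2.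
  by move=> h; rewrite -{1}[a2]mul1r P2 // e1 scale1r.
have prod a1 a2 : a1 \in A1 -> a2 \in A2 ->
    \sum_(p <- Delta (a1 * a2)) M p.1 p.2 = a1 * a2.
  move=> ha1 ha2.
  have [t1 [ht1 ht1']] := D1 _ ha1.
  have [t2 [ht2 ht2']] := D2 _ ha2.
  rewrite (transfer (Dmul a1 a2) hM) /tmul big_allpairs_dep /=.
  rewrite (transfer (B := fun x y => \sum_(q <- Delta a2) M (x * q.1) (y * q.2)) ht1); last first.
    by apply: bilin_sum => q; apply: bilin_mulr.
  rewrite exchange_big /=.
  rewrite (transfer (B := fun x y => \sum_(p <- t1) M (p.1 * x) (p.2 * y)) ht2); last first.
    by apply: bilin_sum => q; apply: bilin_mull.
  rewrite exchange_big /=.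
  have e1' : \sum_(p <- t1) eps p.2 *: p.1 = a1.
    rewrite -(transfer (B := fun x y => eps y *: x) ht1) ?cr //.
    split=> k x y z /=; first by rewrite scalerDr scalerA mulrC -scalerA.
    by rewrite elin scalerDl scalerA.
  have e2' : \sum_(q <- t2) eps q.1 *: q.2 = a2.
    rewrite -(transfer (B := fun x y => eps x *: y) ht2) ?cl //.
    split=> k x y z /=; first by rewrite elin scalerDl scalerA.
    by rewrite scalerDr scalerA mulrC -scalerA.
  transitivity (Pi1 (\sum_(p <- t1) eps p.2 *: p.1) * Pi2 (\sum_(q <- t2) eps q.1 *: q.2)); last first.
    by rewrite e1' e2' L3 // L4.
  rewrite (endo_sum _ _ hP1) (endo_sum _ _ hP2) mulr_suml big_seq [RHS]big_seq.
  apply: eq_bigr => p hp; rewrite mulr_sumr big_seq [RHS]big_seq.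
  apply: eq_bigr => q hq; rewrite /M L1 ?ht2' // L2 ?ht1' //.
  rewrite (endoZ _ _ hP1) (endoZ _ _ hP2) -!scalerAl -!scalerAr !scalerA.
  by rewrite mulrC.
move=> a; have [t [ht ->]] := surj a.
elim: t ht => [|p t IH] ht.
  rewrite big_nil.
  have := Phi_lin 1 0 0 Dlin hM; rewrite !scale1r addr0 => /(congr1 (fun z => z - \sum_(p <- Delta 0) M p.1 p.2)).
  by rewrite addrK subrr => /esym.
rewrite big_cons.
have -> : p.1 * p.2 + \sum_(j <- t) j.1 * j.2 = 1 *: (p.1 * p.2) + \sum_(j <- t) j.1 * j.2.
  by rewrite scale1r.
have := Phi_lin 1 (p.1 * p.2) (\sum_(j <- t) j.1 * j.2) Dlin hM; rewrite /M => ->.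
rewrite scale1r IH; last first.
  by move=> q hq; apply: ht; rewrite inE hq orbT.
have [h1 h2] := ht p (mem_head _ _).
by have := prod _ _ h1 h2; rewrite /M => ->; rewrite scale1r.
Qed.
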